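(* Let $X$ be the dihedral quandle $R_n$. (1) If $n$ is odd, the identity map is the only good involution of $X$. (2) If $n=2m$ with $m$ odd, a good involution of $X$ is either the identity map or the antipodal map. (3) If $n=2m$ with $m$ even, there are exactly four good involutions: the identity map, the antipodal map and the two half-antipodal maps.
   Context: A quandle is a set $X$ with a binary operation $(x,y)\mapsto x^y$ such that $x^x=x$; for all $x,y$ there is a unique $z$ with $z^y=x$ (written $x^{y^{-1}}$); and $(x^y)^z=(x^z)^{(y^z)}$. A good involution of $X$ is a map $\rho:X\to X$ with $\rho\circ\rho={\rm id}$, $\rho(x^y)=\rho(x)^y$ and $x^{\rho(y)}=x^{y^{-1}}$ for all $x,y$. The dihedral quandle $R_n$ is $\mathbb{Z}/n\mathbb{Z}$ with $x^y=2y-x \pmod n$. For $n=2m$, the antipodal map is $i\mapsto i+m$. For $n=2m$ with $m$ even, the half-antipodal maps are $\rho_1$ with $\rho_1(i)=i$ for odd $i$ and $\rho_1(i)=i+m$ for even $i$, and $\rho_2$ with $\rho_2(i)=i+m$ for odd $i$ and $\rho_2(i)=i$ for even $i$ (parity is well defined since $n$ is even). *)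

(* Defs.v *)
From HB Require Import structures.
From mathcomp Require Import all_boot all_order all_algebra.
Set Implicit Arguments. Unset Strict Implicit. Unset Printing Implicit Defensive.
Import GRing.Theory.
Local Open Scope ring_scope.

(* The dihedral quandle R_N with N = n.+1 >= 1 : carrier Z/NZ represented by
   'I_n.+1 (with its Zp additive group), operation x^y = 2y - x. *)
Definition dih_op (n : nat) (x y : 'I_n.+1) : 'I_n.+1 := y + y - x.

(* Good involution of a quandle (X, op).  x^{y^{-1}} is the unique z with
   z^y = x; so "x^{rho y} = x^{y^{-1}}" is written "(x^{rho y})^y = x". *)
Definition good_involution (X : Type) (op : X -> X -> X) (rho : X -> X) : Prop :=
  [/\ forall x, rho (rho x) = x,
      forall x y, rho (op x y) = op (rho x) y &
      forall x y, op (op x (rho y)) y = x].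

Definition antipodal (n m : nat) (i : 'I_n.+1) : 'I_n.+1 := i + inZp m.

(* half-antipodal maps (parity of the representative in {0,...,n}) *)
Definition half_antipodal1 (n m : nat) (i : 'I_n.+1) : 'I_n.+1 :=
  if odd i then i else i + inZp m.
Definition half_antipodal2 (n m : nat) (i : 'I_n.+1) : 'I_n.+1 :=
  if odd i then i + inZp m else i.
Arguments antipodal n m i : clear implicits.
Arguments half_antipodal1 n m i : clear implicits.
Arguments half_antipodal2 n m i : clear implicits.
Arguments dih_op n x y : clear implicits.

(* Main.v *)
Require Import Defs.
From mathcomp Require Import all_boot all_order all_algebra.
From mathcomp Require Import zify.
Import GRing.Theory.

Section Aux.
Context {n : nat}.
Local Notation I := ('I_n.+1).

Lemma valD (x y : I) : val (x + y)%R = (x + y) %% n.+1. Proof. by []. Qed.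
Lemma valZ (a : nat) : val (inZp a : I) = a %% n.+1. Proof. by []. Qed.

Lemma oddD (x y : I) : ~~ odd n.+1 -> odd (x + y)%R = odd x (+) odd y.
Proof. by move=> h; rewrite valD odd_mod ?oddD //; apply/negbTE. Qed.

Lemma oddB2 (x y : I) : ~~ odd n.+1 -> odd (y + y - x)%R = odd x.
Proof.
move=> h; have := oddD (y + y - x)%R x h; rewrite GRing.subrK oddD // addbb.
by case: (odd x); case: (odd _).
Qed.

Lemma two0_odd (z : I) : odd n.+1 -> (z + z = 0)%R -> z = 0%R.
Proof.
move=> ho h; have := congr1 val h; rewrite valD /= => e; apply: val_inj => /=.
have zl := ltn_ord z.
case: (ltnP (z + z) n.+1) => hz.
  by move: e; rewrite modn_small //; lia.
have : (z + z - n.+1 + n.+1) %% n.+1 = 0 by rewrite subnK.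
rewrite modnDr modn_small; last lia.
move=> e2; have ee : z + z = n.+1 by lia.
have : odd (z + z) by rewrite ee.
by rewrite addnn odd_double.
Qed.

Lemma two0_even (z : I) m : n.+1 = m.*2 -> (z + z = 0)%R -> z = 0%R \/ z = inZp m.
Proof.
move=> hm h; have := congr1 val h; rewrite valD /= => e.
move: (hm); rewrite -addnn => hm'.
have zl := ltn_ord z.
case: (ltnP (z + z) n.+1) => hz.
  by left; apply: val_inj => /=; move: e; rewrite modn_small //; lia.
have : (z + z - n.+1 + n.+1) %% n.+1 = 0 by rewrite subnK.
rewrite modnDr modn_small; last lia.
move=> e2; right; apply: val_inj; rewrite valZ modn_small; last lia; change (nat_of_ord z = m); lia.
Qed.

Lemma inZpm_neq0 m : n.+1 = m.*2 -> (inZp m : I) <> 0%R.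
Proof. move=> hm h; have := congr1 val h; rewrite valZ /= modn_small; move: hm; rewrite -addnn; lia. Qed.

Lemma odd_inZpm m : n.+1 = m.*2 -> odd (inZp m : I) = odd m.
Proof. by move=> hm; rewrite valZ modn_small //; move: hm; rewrite -addnn; lia. Qed.

Lemma odd_inZp1 m : n.+1 = m.*2 -> odd (inZp 1 : I) = true.
Proof. by move=> hm; rewrite valZ modn_small //; move: hm; rewrite -addnn; lia. Qed.

Lemma good_of_e (e : I -> I) :
  (forall x, e x + e x = 0)%R -> (forall x y, e (y + y - x) = e x)%R ->
  (forall x, e (x + e x) = e x)%R -> good_involution (dih_op n) (fun x => x + e x)%R.
Proof.
move=> H1 H2 H3; have Ne x : (- e x = e x)%R by apply/eqP; rewrite eq_sym -addr_eq0 H1.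
split.
- by move=> x /=; rewrite H3 -addrA H1 addr0.
- move=> x y; rewrite /dih_op H2 opprD Ne addrA //.
- move=> x y; rewrite /dih_op.
  have -> : (y + e y + (y + e y) = y + y)%R.
    by rewrite addrACA H1 addr0 // .
  by rewrite opprB addrC subrK.
Qed.

Lemma e_of_good (rho : I -> I) : good_involution (dih_op n) rho ->
  let e := (fun x => rho x - x)%R in
  [/\ (forall x, e x + e x = 0)%R, (forall x y, e (y + y - x) = e x)%R &
      forall x, rho x = x + e x]%R.
Proof.
case=> [Hi Hb Hc] e.
have H1 x : (e x + e x = 0)%R.
  have := Hc 0%R x; rewrite /dih_op subr0 => /eqP; rewrite subr_eq0 => /eqP h.
  by rewrite /e addrACA -opprD h subrr.
have Ne x : (- e x = e x)%R by apply/eqP; rewrite eq_sym -addr_eq0 H1.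
split => //.
- move=> x y; rewrite /e; have := Hb x y; rewrite /dih_op => ->.
  rewrite -[RHS]Ne /e; by rewrite opprB addrC addrA subrK opprB.
- by move=> x; rewrite /e addrC subrK.
Qed.

Lemma good_ext (rho f : I -> I) : rho =1 f -> good_involution (dih_op n) f ->
  good_involution (dih_op n) rho.
Proof. by move=> h [H1 H2 H3]; split=> *; rewrite !h. Qed.

Lemma two_m m : n.+1 = m.*2 -> (inZp m + inZp m : I)%R = 0%R.
Proof.
move=> hm; have hl : m < n.+1 by move: hm; rewrite -addnn; lia.
by apply: val_inj; rewrite valD valZ /= (modn_small hl) addnn -hm modnn.
Qed.

Lemma neq_shift m (x : I) : n.+1 = m.*2 -> x <> (x + inZp m)%R.
Proof.
move=> hm h; apply: (@inZpm_neq0 m hm); apply: (@addrI _ x); by rewrite addr0 -h.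
Qed.

Lemma inZp0 : (inZp 0 : I) = 0%R. Proof. by apply: val_inj. Qed.

Lemma split_par (x : I) : x = (inZp x./2 + inZp x./2 + inZp (odd x))%R.
Proof.
apply: val_inj; rewrite !valD !valZ /= !modnDm.
have e : x./2 + x./2 + odd x = nat_of_ord x.
  have := odd_double_half x; rewrite -addnn; lia.
have h2 : x./2 < n.+1.
  have := ltn_ord x; move: e; change (half (nat_of_ord x)) with (x./2); lia.
by rewrite (modn_small h2) e modn_small.
Qed.

Lemma e_parity (e : I -> I) : (forall x y, e (y + y - x) = e x)%R ->
  forall x, e x = e (inZp (odd x)).
Proof.
move=> H x; set z : I := inZp (odd x); set y : I := inZp x./2.
have -> : x = (y + y - - z)%R by rewrite opprK [LHS]split_par.
rewrite H; have := H z 0%R; by rewrite addr0 sub0r.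
Qed.

Lemma good_const (c : I) : (c + c = 0)%R -> good_involution (dih_op n) (fun x => x + c)%R.
Proof. move=> h; apply: (@good_of_e (fun _ => c)) => //. Qed.

Lemma good_ha m (b : bool) : n.+1 = m.*2 -> ~~ odd m ->
  good_involution (dih_op n) (fun x => x + (if odd x (+) b then 0 else inZp m))%R.
Proof.
move=> hm hmo; have ev : ~~ odd n.+1 by rewrite hm odd_double.
apply: good_of_e.
- by move=> x; case: ifP; rewrite ?addr0 // two_m.
- by move=> x y; rewrite oddB2.
- move=> x; case h: (odd x (+) b); first by rewrite addr0 h.
  by rewrite oddD // odd_inZpm // (negbTE hmo) addbF h.
Qed.
End Aux.

Theorem theorem3p2 (n : nat) :
  (odd n.+1 ->
     forall rho : 'I_n.+1 -> 'I_n.+1,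
       good_involution (dih_op n) rho <-> rho =1 id)
  /\
  (forall m : nat, n.+1 = m.*2 -> odd m ->
     forall rho : 'I_n.+1 -> 'I_n.+1,
       good_involution (dih_op n) rho <->
       (rho =1 id \/ rho =1 antipodal n m))
  /\
  (forall m : nat, n.+1 = m.*2 -> ~~ odd m ->
     (forall rho : 'I_n.+1 -> 'I_n.+1,
        good_involution (dih_op n) rho <->
        [\/ rho =1 id, rho =1 antipodal n m,
            rho =1 half_antipodal1 n m | rho =1 half_antipodal2 n m])
     /\
     ([/\ ~ (id =1 antipodal n m), ~ (id =1 half_antipodal1 n m)
        & ~ (id =1 half_antipodal2 n m)] /\
      [/\ ~ (antipodal n m =1 half_antipodal1 n m),
          ~ (antipodal n m =1 half_antipodal2 n m)
        & ~ (half_antipodal1 n m =1 half_antipodal2 n m)])).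
Proof.
have gid : good_involution (dih_op n) id.
  apply: (@good_ext _ _ (fun x => x + 0)%R); first by move=> x; rewrite addr0.
  by apply: good_const; rewrite addr0.
split.
  move=> ho rho; split.
    move=> g; have [H1 _ He] := @e_of_good _ _ g.
    by move=> x; rewrite He (two0_odd _ ho (H1 x)) addr0.
  by move=> h; apply: (@good_ext _ _ _ h).
have gant m : n.+1 = m.*2 -> good_involution (dih_op n) (antipodal n m).
  by move=> hm; apply: good_const; rewrite (@two_m _ _ hm).
have ev m : n.+1 = m.*2 -> ~~ odd n.+1 by move=> ->; rewrite odd_double.
have four m rho : n.+1 = m.*2 -> good_involution (dih_op n) rho ->
   let e0 := (rho (inZp 0) - inZp 0)%R in let e1 := (rho (inZp 1) - inZp 1)%R in
   (e0 = 0%R \/ e0 = inZp m) /\ (e1 = 0%R \/ e1 = inZp m) /\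
   forall x, rho x = (x + if odd x then e1 else e0)%R.
  move=> hm g e0 e1; have [H1 H2 He] := @e_of_good _ _ g.
  split; first exact: (two0_even _ _ hm (H1 _)).
  split; first exact: (two0_even _ _ hm (H1 _)).
  by move=> x; rewrite He (@e_parity _ _ H2 x); case: (odd x).
split.
  move=> m hm hmo rho; split; last first.
    by case=> h; apply: (@good_ext _ _ _ h) => //; apply: gant.
  move=> g; have [Hi _ _] := g.
  have [[E0|E0] [[E1|E1] Hr]] := four m rho hm g.
  - by left=> x; rewrite Hr; case: (odd x); rewrite ?E0 ?E1 addr0.
  - exfalso; have := Hi (inZp 1); rewrite (Hr (inZp 1)) (@odd_inZp1 _ _ hm) E1.
    rewrite Hr oddD ?(ev m) // (@odd_inZp1 _ _ hm) (@odd_inZpm _ _ hm) hmo E0 addr0 => h.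
    by apply: (@neq_shift n m (inZp 1)).
  - exfalso; have := Hi (inZp 0); rewrite (Hr (inZp 0)) /= E0 (@inZp0 n) add0r.
    rewrite Hr (@odd_inZpm _ _ hm) hmo E1 addr0; exact: (@inZpm_neq0 n m hm).
  - by right=> x; rewrite Hr /antipodal; case: (odd x); rewrite ?E0 ?E1.
move=> m hm hmo; split.
  move=> rho; split; last first.
    case=> h; apply: (@good_ext _ _ _ h) => //; first exact: gant.
      apply: (@good_ext _ _ _ _ (good_ha _ false hm hmo)).
      by move=> x; rewrite /half_antipodal1 addbF; case: (odd x); rewrite ?addr0.
    apply: (@good_ext _ _ _ _ (good_ha _ true hm hmo)).
    by move=> x; rewrite /half_antipodal2 addbT; case: (odd x); rewrite ?addr0.
  move=> g; have [[E0|E0] [[E1|E1] Hr]] := four m rho hm g.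
  - by constructor 1=> x; rewrite Hr; case: (odd x); rewrite ?E0 ?E1 addr0.
  - by constructor 4=> x; rewrite Hr /half_antipodal2; case: (odd x); rewrite ?E0 ?E1 ?addr0.
  - by constructor 3=> x; rewrite Hr /half_antipodal1; case: (odd x); rewrite ?E0 ?E1 ?addr0.
  - by constructor 2=> x; rewrite Hr /antipodal; case: (odd x); rewrite ?E0 ?E1.
have o1 : odd (inZp 1 : 'I_n.+1) by rewrite (@odd_inZp1 _ _ hm).
have ns := fun x => @neq_shift n m x hm.
split; split.
- by move=> h; apply: (ns 0%R); apply: h.
- by move=> h; apply: (ns 0%R); apply: h.
- by move=> h; apply: (ns (inZp 1)); have := h (inZp 1); rewrite /half_antipodal2 o1.
- by move=> h; apply: (ns (inZp 1)); have := h (inZp 1); rewrite /half_antipodal1 /antipodal o1 => ->.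
- by move=> h; apply: (ns 0%R); have := h 0%R; rewrite /half_antipodal2 /antipodal /= => ->.
- by move=> h; apply: (ns 0%R); have := h 0%R; rewrite /half_antipodal2 /half_antipodal1 /= => ->.
Qed.
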